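(* Let $G$ be an internally vertex-color-avoiding connected graph on $n$ vertices whose vertices are colored with exactly $k$ colors. Then $|E(G)|\ge \binom{n}{2}$ if $k=1$, and $|E(G)|\ge \left\lceil \frac{2k-1}{2k-2}n-\frac{k}{k-1}\right\rceil$ if $k\ge 2$. Moreover, these lower bounds are sharp (for each $k$, attained by suitable such graphs for all sufficiently large $n$).
   Context: Vertex-colorings are arbitrary (not necessarily proper). Two vertices $u,v$ are internally vertex-$c$-avoiding connected (for a color $c$) if some $u$-$v$ path contains no internal vertex of color $c$. A graph is internally vertex-color-avoiding connected if any two vertices are internally vertex-$c$-avoiding connected for every color $c$. *)

(* Defs.v *)
From HB Require Import structures.
From mathcomp Require Import all_boot all_order all_algebra.
Set Implicit Arguments. Unset Strict Implicit. Unset Printing Implicit Defensive.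
From mathcomp Require Import ssrint rat archimedean.
Import Order.TTheory GRing.Theory Num.Theory.

Definition simple_graph n (e : rel 'I_n) : Prop := symmetric e /\ irreflexive e.

(* Edge set: unordered pairs {u,v} counted once, as pairs with u < v. *)
Definition num_edges n (e : rel 'I_n) : nat :=
  #|[set p : 'I_n * 'I_n | e p.1 p.2 && (p.1 < p.2)%N]|.

(* The (not necessarily proper) vertex colouring c uses exactly k colours. *)
Definition uses_exactly_k_colors n k (c : 'I_n -> 'I_k) : Prop :=
  forall j : 'I_k, exists v, c v = j.

(* u-v path: u :: p is an e-path with no repeated vertex ending at v;
   its internal vertices are those of u :: p other than the first and last,
   i.e. behead (belast u p). *)
Definition int_avoiding_connected n k (e : rel 'I_n) (c : 'I_n -> 'I_k)
    (col : 'I_k) (u v : 'I_n) : Prop :=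
  exists p : seq 'I_n,
    [/\ path e u p, last u p = v, uniq (u :: p) &
        all (fun w => c w != col) (behead (belast u p))].

Definition int_vertex_color_avoiding_connected n k (e : rel 'I_n)
    (c : 'I_n -> 'I_k) : Prop :=
  forall (col : 'I_k) (u v : 'I_n), int_avoiding_connected e c col u v.

Definition icac_bound (n k : nat) : int :=
  if k == 1%N then Posz (binomial n 2)
  else Num.ceil (((2 * k - 1)%N%:R / (2 * k - 2)%N%:R) * n%:R - k%:R / (k - 1)%N%:R
                  : rat)%R.

(* Main.v *)
Require Import Defs.
From HB Require Import structures.
From mathcomp Require Import all_boot all_order all_algebra.
From mathcomp Require Import ssrint rat archimedean.
From mathcomp Require Import zify.
Import Order.TTheory GRing.Theory Num.Theory.
Set Implicit Arguments. Unset Strict Implicit. Unset Printing Implicit Defensive.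
From mathcomp Require Import ring lra.
Lemma tree_bound n (e : rel 'I_n) (S : {set 'I_n}) :
  symmetric e ->
  (forall x y, x \in S -> y \in S ->
     exists p, [/\ path e x p, last x p = y & all (mem S) p]) ->
  #|S| <= #|[set p : 'I_n * 'I_n | [&& e p.1 p.2, p.1 < p.2, p.1 \in S & p.2 \in S]]| + 1.
Proof.
move=> esym conn.
case: (set_0Vmem S) => [-> | [r rS]]; first by rewrite cards0.
pose P v len := (v \notin S) ||
  [exists t : len.-tuple 'I_n, [&& path e r t, last r t == v & all (mem S) t]].
have Pex v : exists len, P v len.
  case vS: (v \in S); last by exists 0; rewrite /P vS.
  have [p [p1 p2 p3]] := conn r v rS vS.
  exists (size p); apply/orP; right; apply/existsP; exists (in_tuple p).
  by rewrite /= p1 p2 p3 eqxx.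
pose d v := ex_minn (Pex v).
have dP v : P v (d v) by rewrite /d; case: ex_minnP.
have dmin v m : P v m -> d v <= m by rewrite /d; case: ex_minnP => ? _; apply.
have key v : v \in S -> v != r -> exists w, [&& w \in S, e w v & d w < d v].
  move=> vS vr; move: (dP v); rewrite /P vS /= => /existsP [t].
  case/and3P; case: t => /= t /eqP st.
  case/lastP: t st => [|q z] st; first by move=> _ /eqP vr'; rewrite -vr' eqxx in vr.
  rewrite rcons_path last_rcons all_rcons => /andP[pq ez] /eqP zv /andP[_ aq].
  have lS : last r q \in S.
    by move: (mem_last r q); rewrite inE => /orP[/eqP->//|]; move/(allP aq).
  exists (last r q); rewrite -zv ez lS /=.
  have : P (last r q) (size q).
    by apply/orP; right; apply/existsP; exists (in_tuple q); rewrite /= pq eqxx aq.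
  move/dmin => h; rewrite zv -st size_rcons; exact: h.
pose par v := odflt v [pick w | [&& w \in S, e w v & d w < d v]].
have parP v : v \in S -> v != r -> [&& par v \in S, e (par v) v & d (par v) < d v].
  move=> vS vr; rewrite /par; case: pickP => [w //|none].
  by have [w] := key v vS vr; rewrite none.
pose f (v : 'I_n) := if v < par v then (v, par v) else (par v, v).
have finj : {in S :\ r &, injective f}.
  move=> v v'; rewrite !inE => /andP[vr vS] /andP[v'r v'S].
  have /and3P[_ _ h] := parP v vS vr; have /and3P[_ _ h'] := parP v' v'S v'r.
  rewrite /f; case: ifP => _; case: ifP => _ [] e1 e2 //.
  all: try by move: h h'; rewrite ?e2 ?e1 => h h'; lia.
  all: try by move: h h'; rewrite ?e1 ?e2 => h h'; lia.
have sub : f @: (S :\ r) \subset [set p : 'I_n * 'I_n | [&& e p.1 p.2, p.1 < p.2, p.1 \in S & p.2 \in S]].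
  apply/subsetP => y /imsetP[x]; rewrite !inE => /andP[xr xS] ->.
  have /and3P[pS ep hd] := parP x xS xr.
  rewrite /f; case: ltngtP => [lt|gt|eq] /=.
  - by rewrite lt xS pS esym ep.
  - by rewrite gt xS pS ep.
  - by move: hd; rewrite -(val_inj eq) ltnn.
have := cardsD1 r S; rewrite rS => hc.
apply: (@leq_trans (1 + #|S :\ r|)); first by rewrite hc.
rewrite addnC leq_add2r -(card_in_imset finj).
exact: subset_leq_card.
Qed.
Lemma card_sum (T : finType) (P : pred T) : #|[set x | P x]| = \sum_x (P x : nat).
Proof.
rewrite -sum1_card big_mkcond; apply: eq_bigr => x _; rewrite inE; by case: (P x).
Qed.

Lemma sum_eq1 (T : finType) (a : T) : \sum_x ((a == x) : nat) = 1.
Proof.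
rewrite -card_sum (_ : [set x | a == x] = [set a]) ?cards1 //.
by apply/setP => x; rewrite !inE eq_sym.
Qed.

Lemma dom_of n k (e : rel 'I_n) (c : 'I_n -> 'I_k) : (2 <= k)%N ->
  uses_exactly_k_colors c -> int_vertex_color_avoiding_connected e c ->
  forall v, exists w, e v w && (c w != c v).
Proof.
move=> k2 uk ic v.
have [j jv] : exists j : 'I_k, j != c v.
  case: (c v) => cv cvk.
  case: (cv =P 0) => [cv0|cvn].
    exists (Ordinal k2); apply/negP => /eqP/(congr1 val) /=; rewrite cv0 //.
  have k0 : 0 < k by lia.
  exists (Ordinal k0); apply/negP => /eqP/(congr1 val) /= h; apply: cvn; by rewrite -h.
have [y cy] := uk j.
have [p [pp lp _ ip]] := ic (c v) v y.
case: p pp lp ip => [|z p] /=.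
  by move=> _ vy; move: jv; rewrite -cy -vy eqxx.
move=> /andP[evz _] lp ip; exists z; rewrite evz /=.
case: p lp ip => [|z' p] /=.
  by move=> zy _; rewrite zy cy.
by move=> _ /andP[].
Qed.

Lemma conn_of n k (e : rel 'I_n) (c : 'I_n -> 'I_k) :
  int_vertex_color_avoiding_connected e c ->
  forall col x y, c x != col -> c y != col ->
  exists p, [/\ path e x p, last x p = y & all (mem [set v | c v != col]) p].
Proof.
move=> ic col x y cx cy.
have [p [pp lp _ ip]] := ic col x y.
exists p; split => //.
case/lastP: p pp lp ip => [//|q z] _.
rewrite last_rcons belast_rcons /= all_rcons => -> ip.
apply/andP; split; first by have : y \in [set v | c v != col] by rewrite inE.
apply/allP => w /(allP ip) h; by have : w \in [set v | c v != col] by rewrite inE.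
Qed.
Lemma lower_main n k (e : rel 'I_n) (c : 'I_n -> 'I_k) : (2 <= k)%N ->
  symmetric e -> uses_exactly_k_colors c -> int_vertex_color_avoiding_connected e c ->
  (2 * k - 1) * n <= 2 * (k - 1) * num_edges e + 2 * k.
Proof.
move=> k2 esym uk ic.
pose E (p : 'I_n * 'I_n) := e p.1 p.2 && (p.1 < p.2).
have m_eq : num_edges e = \sum_p (E p : nat) by rewrite /num_edges card_sum.
pose S (col : 'I_k) := [set v | c v != col].
pose F col p := (E p && (c p.1 != col) && (c p.2 != col)).
pose B p := E p && (c p.1 != c p.2).
have tb col : #|S col| <= \sum_p (F col p : nat) + 1.
  apply: leq_trans (tree_bound esym (S := S col) _) _.
    move=> x y; rewrite !inE => hx hy; exact: conn_of ic col x y hx hy.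
  rewrite card_sum leq_add2r; apply/eq_leq/eq_bigr => p _.
  by rewrite /F /E !inE !andbA.
have sumS : \sum_col #|S col| + n = k * n.
  have h1 col : #|S col| + #|[set v | c v == col]| = n.
    rewrite -[n in RHS]card_ord -(cardsC [set v | c v == col]) addnC.
    congr (_ + _); apply: eq_card => v; by rewrite !inE.
  have h2 : \sum_col #|[set v | c v == col]| = n.
    under eq_bigr => col _ do rewrite card_sum.
    rewrite exchange_big /=.
    under eq_bigr => v _ do rewrite sum_eq1.
    by rewrite sum_nat_const card_ord muln1.
  have h3 : \sum_col (#|S col| + #|[set v | c v == col]|) = k * n.
    under eq_bigr => col _ do rewrite h1.
    by rewrite sum_nat_const card_ord.
  by rewrite big_split /= h2 in h3.
have sumE : \sum_col \sum_p (F col p : nat) + \sum_p (B p : nat) = (k - 1) * \sum_p (E p : nat).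
  rewrite exchange_big /= -big_split /= big_distrr /=.
  apply: eq_bigr => p _.
  rewrite /F /B; case: (E p) => /=; last by rewrite big1 // muln0.
  rewrite muln1 -card_sum.
  have -> : [set x | (c p.1 != x) && (c p.2 != x)] = ~: [set c p.1; c p.2].
    by apply/setP => x; rewrite !inE negb_or ![x == _]eq_sym.
  have := cardsC [set c p.1; c p.2]; rewrite cards2 card_ord.
  case: (c p.1 != c p.2) => /=; lia.
have nX : n <= 2 * \sum_p (B p : nat).
  have dom := dom_of k2 uk ic.
  have hv v : 1 <= \sum_p ((B p && ((p.1 == v) || (p.2 == v))) : nat).
    have [w /andP[evw cw]] := dom v.
    have vw : v != w by apply: contraNneq cw => ->.
    pose p := if v < w then (v, w) else (w, v).
    rewrite (bigD1 p) //= (_ : B p && _ = true) //.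
    rewrite /p /B /E; case: ltngtP => h /=.
    - by rewrite evw h eq_sym cw eqxx.
    - by rewrite esym evw h cw eqxx orbT.
    - by move: vw; rewrite (val_inj h) eqxx.
  have : \sum_(v : 'I_n) 1 <= \sum_v \sum_p ((B p && ((p.1 == v) || (p.2 == v))) : nat).
    by apply: leq_sum => v _; exact: hv.
  rewrite sum_nat_const card_ord muln1 => h.
  apply: leq_trans h _; rewrite exchange_big /= big_distrr /=.
  apply: leq_sum => p _; case: (B p) => /=; last by rewrite big1.
  apply: leq_trans (_ : \sum_v (((p.1 == v) : nat) + (p.2 == v)) <= _).
    by apply: leq_sum => v _; case: (p.1 == v); case: (p.2 == v).
  by rewrite big_split /= !sum_eq1.
have tbs : \sum_col #|S col| <= \sum_col \sum_p (F col p : nat) + k.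
  apply: leq_trans (_ : _ <= \sum_col (\sum_p (F col p : nat) + 1)) _.
    by apply: leq_sum => col _; exact: tb.
  by rewrite big_split /= sum_nat_const card_ord muln1.
rewrite m_eq; nia.
Qed.
Lemma bound_eq n k : (2 <= k)%N -> (2 <= n)%N ->
  icac_bound n k = Posz (n - 1 + (n - 2) %/ (2 * k - 2) + ((n - 2) %% (2 * k - 2) != 0%N))%N.
Proof.
move=> k2 n2.
rewrite /icac_bound; case: eqP => [k1|_]; first by move: k2; rewrite k1.
have [k' kk] : exists k', k = k'.+2 by exists (k - 2); lia.
subst k.
have -> : (2 * k'.+2 - 2 = 2 * k' + 2)%N by lia.
have -> : (2 * k'.+2 - 1 = 2 * k' + 3)%N by lia.
have -> : (k'.+2 - 1 = k' + 1)%N by lia.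
set L := (2 * k' + 2)%N; set q := ((n - 2) %/ L)%N; set r := ((n - 2) %% L)%N.
have L0 : (0 < L)%N by rewrite /L; lia.
have rL : (r < L)%N by rewrite /r ltn_mod.
have hn : n = (L * q + r + 2)%N by rewrite /q /r (divn_eq (n - 2) L); lia.
have k0 : (0 <= k'%:R :> rat)%R by apply: ler0n.
have hx : ((2 * k' + 3)%N%:R / L%:R * n%:R - k'.+2%:R / (k' + 1)%N%:R : rat)%R
          = ((L * q + r + 1 + q)%N%:R + r%:R / L%:R)%R.
  rewrite hn /L !natrD !natrM -addn2 natrD.
  by field; apply/andP; split; apply/eqP; lra.
rewrite hx.
set a := (L * q + r + 1 + q)%N.
have ra : (0 <= r%:R / L%:R :> rat)%R by apply: divr_ge0; apply: ler0n.
have rb : (r%:R / L%:R <= 1 :> rat)%R.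
  by rewrite ler_pdivrMr ?ltr0n // mul1r ler_nat ltnW.
case: (eqVneq r 0%N) => [r0|rn0].
  rewrite [X in Posz X](_ : _ = a); last by rewrite /a r0 /=; lia.
  rewrite r0 mul0r addr0; exact: (intrKceil (Posz a)).
rewrite [X in Posz X](_ : _ = a.+1); last by move: rn0; rewrite /a /r; lia.
apply/eqP; rewrite ceil_eq.
have -> : (Posz a.+1 - 1)%R = Posz a by rewrite -addn1 PoszD addrK.
have e1 : ((Posz a)%:~R : rat)%R = (a%:R)%R by [].
have e2 : ((Posz a.+1)%:~R : rat)%R = (a%:R + 1)%R.
  by change ((a.+1)%:R = a%:R + 1 :> rat)%R; rewrite natr1.
rewrite e1 e2.
have rp : (0 < r%:R / L%:R :> rat)%R by apply: divr_gt0; rewrite ltr0n // lt0n.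
apply/andP; split; lra.
Qed.
Lemma num_edges_nat n (E : rel nat) :
  num_edges (fun x y : 'I_n => E x y) = \sum_(0 <= b < n) count (E^~ b) (iota 0 b).
Proof.
rewrite /num_edges card_sum -(pair_bigA _ (fun (i j : 'I_n) => (E i j && (i < j) : nat))) /=.
rewrite exchange_big /= big_mkord; apply: eq_bigr => b _.
rewrite -sum1_count.
have -> : \sum_(i <- iota 0 b | E i b) 1 = \sum_(0 <= i < b) (E i b : nat).
  by rewrite /index_iota subn0 big_mkcond; apply: eq_bigr => i _; case: (E i b).
rewrite big_mkord (big_ord_widen n (fun i => (E i b : nat)) (ltnW (ltn_ord b))).
rewrite [RHS]big_mkcond; apply: eq_bigr => i _; by case: (i < b); rewrite ?andbT ?andbF.
Qed.

Lemma card_lt n : num_edges (fun x y : 'I_n => x != y :> nat) = 'C(n, 2).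
Proof.
rewrite (num_edges_nat n (fun a b : nat => a != b)) -bin2_sum; apply: eq_bigr => b _.
rewrite (eq_in_count (a2 := predT)) ?count_predT ?size_iota //.
by move=> a; rewrite mem_iota /= => h; rewrite neq_ltn; apply/orP; left; lia.
Qed.
Lemma k1_complete n (e : rel 'I_n) (c : 'I_n -> 'I_1) :
  int_vertex_color_avoiding_connected e c -> forall u v : 'I_n, u != v -> e u v.
Proof.
move=> ic u v uv.
have [p [pp lp _ ip]] := ic (c u) u v.
case: p pp lp ip => [|z [|z' p]] /=.
- by move=> _ vu; rewrite vu eqxx in uv.
- by move=> /andP[h _] <-.
- move=> _ _ /andP[h _]; move: h; by rewrite (ord1 (c z)) (ord1 (c u)).
Qed.

Lemma two_le_n n k (c : 'I_n -> 'I_k) : (2 <= k)%N -> uses_exactly_k_colors c -> (2 <= n)%N.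
Proof.
move=> k2 uk.
have [v0 h0] := uk (Ordinal (ltnW k2)); have [v1 h1] := uk (Ordinal k2).
have : v0 != v1 by apply/eqP => e01; move: h0 h1; rewrite e01 => -> /(congr1 val).
move: (ltn_ord v0) (ltn_ord v1); rewrite -val_eqE /=; lia.
Qed.

Lemma part1 n k (e : rel 'I_n) (c : 'I_n -> 'I_k) :
      (1 <= k)%N -> simple_graph e -> uses_exactly_k_colors c ->
      int_vertex_color_avoiding_connected e c ->
      (icac_bound n k <= Posz (num_edges e))%R.
Proof.
move=> k1 [esym eirr] uk ic.
case: (eqVneq k 1) => [kk|k2].
  subst k; rewrite /icac_bound eqxx lez_nat -card_lt.
  apply: subset_leq_card; apply/subsetP => p; rewrite !inE => /andP[h1 h2]; rewrite h2 andbT.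
  by apply: k1_complete ic _ _ _; rewrite -val_eqE.
have k2' : (2 <= k)%N by lia.
have n2 := two_le_n k2' uk.
rewrite bound_eq // lez_nat.
have := lower_main k2' esym uk ic.
set m := num_edges e.
have := divn_eq (n - 2) (2 * k - 2); have := ltn_mod (n - 2) (2 * k - 2).
set q := ((n - 2) %/ _)%N; set r := ((n - 2) %% _)%N.
case: (eqVneq r 0) => [r0|rn0] /=; nia.
Qed.
Record st := St { sz : nat; uL : nat; wL : nat; E : rel nat; col : nat -> nat }.

Definition base (f : bool) : st :=
  St (2 + f) (if f then 2 else 0) 1
     (fun x y => [|| (x == 0) && (y == 1), (x == 1) && (y == 0),
                     f && (x == 2) && (y < 2) | f && (y == 2) && (x < 2)])
     (fun x => if x == 1 then 1 else 0).

Definition R (t : st) (s x y : nat) :=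
  [|| (x == uL t) && (y == sz t), (x == wL t) && (y == sz t + s - 1) |
      (sz t <= x) && (y == x.+1) && (y < sz t + s)].

Definition step (s : nat) (t : st) : st :=
  St (sz t + s) (sz t) (sz t + s - 1)
     (fun x y => [|| E t x y, R t s x y | R t s y x])
     (fun x => if x < sz t then col t x else if x == sz t then 0
               else if x == sz t + s - 1 then 1 else 2 + (x - sz t - 1) %/ 2).

Definition build f (ss : seq nat) := foldr step (base f) ss.

Inductive reach (e : rel nat) (ok : pred nat) : nat -> nat -> Prop :=
| R0 x : reach e ok x x
| RS x y z : e x y -> ok y -> reach e ok y z -> reach e ok x z.

Lemma reach_trans e ok x y z : reach e ok x y -> reach e ok y z -> reach e ok x z.
Proof.
move=> h; elim: h z => [x0 | x0 y0 z0 h1 h2 _ IH] z1 h3; first exact: h3.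
exact: RS h1 h2 (IH _ h3).
Qed.

Lemma reach1 (e : rel nat) (ok : pred nat) x y : e x y -> ok y -> reach e ok x y.
Proof. move=> h1 h2; apply: RS h1 h2 (R0 _ _ _). Qed.

Lemma reach_sym (e : rel nat) ok x y : symmetric e -> reach e ok x y -> ok x -> reach e ok y x.
Proof.
move=> es; elim=> [x0 _|x' y' z' h1 h2 _ IH hx]; first exact: R0.
apply: reach_trans (IH h2) (reach1 _ hx); by rewrite es.
Qed.

Lemma reach_mono (e e' : rel nat) (ok ok' : pred nat) x y :
  (forall a b, e a b -> e' a b) -> (forall a b, e a b -> ok b -> ok' b) ->
  reach e ok x y -> reach e' ok' x y.
Proof.
move=> he hok; elim=> [z|a b c h1 h2 _ IH]; first exact: R0.
apply: RS (he _ _ h1) (hok _ _ h1 h2) IH.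
Qed.

Record Inv (k : nat) (t : st) : Prop := {
  i_sym : symmetric (E t);
  i_irr : forall x, E t x x = false;
  i_bnd : forall x y, E t x y -> (x < sz t) && (y < sz t);
  i_col : forall x, x < sz t -> col t x < k;
  i_u : uL t < sz t; i_w : wL t < sz t; i_cu : col t (uL t) = 0; i_cw : col t (wL t) = 1;
  i_dom : forall x, x < sz t -> exists y, E t x y && (col t y != col t x);
  i_conn : forall c x y, x < sz t -> y < sz t -> col t x != c -> col t y != c ->
             reach (E t) (fun z => col t z != c) x y }.

Lemma inv_base k f : 2 <= k -> Inv k (base f).
Proof.
move=> k2; split => /=.
- by move=> x y; lia.
- by move=> x; lia.
- by move=> x y; lia.
- by move=> x _; case: (x == 1); lia.
- by case: f.
- by case: f.
- by case: f.
- by [].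
- move=> x xs.
  case: (eqVneq x 1) => [->|x1]; first by exists 0.
  exists 1; move: x1 xs; case: f => /=; lia.
- move=> c x y xs ys cx cy; case: (eqVneq x y) => [->|xy]; first exact: R0.
  apply: reach1 cy; move: xs ys xy; case: f => /=; lia.
Qed.
Section Step.
Variables (k s : nat) (t : st).
Hypothesis k2 : 2 <= k.
Hypothesis s2 : 2 <= s.
Hypothesis sk : s <= 2 * k - 2.
Hypothesis I : Inv k t.

Let S := sz t.
Let t' := step s t.

Lemma col_old x : x < S -> col t' x = col t x.
Proof. by move=> h; rewrite /= /S h. Qed.
Lemma col_u : col t' S = 0.
Proof. by rewrite /= /S ltnn eqxx. Qed.
Lemma col_w : col t' (S + s - 1) = 1.
Proof.
have h1 : (sz t + s - 1 < sz t) = false by lia.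
have h2 : (sz t + s - 1 == sz t) = false by lia.
by rewrite /= /S h1 h2 eqxx.
Qed.
Lemma col_i x : S < x < S + s - 1 -> col t' x = 2 + (x - S - 1) %/ 2.
Proof.
move=> h; rewrite /S in h.
have h1 : (x < sz t) = false by lia.
have h2 : (x == sz t) = false by lia.
have h3 : (x == sz t + s - 1) = false by lia.
by rewrite /= /S h1 h2 h3.
Qed.

Lemma step_sym : symmetric (E t').
Proof.
move=> x y /=; rewrite (i_sym I).
by case: (E t y x); case: (R t s x y); case: (R t s y x).
Qed.

Lemma E_up x : S <= x -> x.+1 < S + s -> E t' x x.+1.
Proof. move=> h1 h2; rewrite /= /R; apply/orP; right; apply/orP; left; rewrite /S in h1 h2; lia. Qed.
Lemma E_u : E t' S (uL t).
Proof. rewrite /= /R /S eqxx; lia. Qed.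
Lemma E_w : E t' (S + s - 1) (wL t).
Proof. rewrite /= /R /S eqxx; lia. Qed.

Lemma chain_up c x y : S <= x -> x <= y -> y < S + s ->
  (forall z, x < z <= y -> col t' z != c) -> reach (E t') (fun z => col t' z != c) x y.
Proof.
move=> hx; elim: y => [|y IH] hxy hy hz.
  have -> : x = 0 by lia. exact: R0.
case: (eqVneq x y.+1) => [->|ne]; first exact: R0.
apply: reach_trans (IH _ _ _) (reach1 _ _); try lia.
- by move=> z hz'; apply: hz; lia.
- apply: E_up; lia.
- apply: hz; lia.
Qed.

Lemma old_lift c x y : x < S -> y < S -> col t x != c -> col t y != c ->
  reach (E t') (fun z => col t' z != c) x y.
Proof.
move=> hx hy cx cy; apply: reach_mono (i_conn I hx hy cx cy).
- by move=> a b h /=; rewrite h.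
- move=> a b /(i_bnd I) /andP[_ hb]; by rewrite col_old.
Qed.

Lemma inv_step : Inv k t'.
Proof.
have Hu := i_u I; have Hw := i_w I; have Hcu := i_cu I; have Hcw := i_cw I.
have Hb := i_bnd I.
split.
- exact: step_sym.
- move=> x; rewrite /= (i_irr I) /R; lia.
- move=> x y /=; case/or3P => [/Hb h|h|h]; move: h; rewrite /R /=; lia.
- move=> x hx; have {}hx : x < S + s by [].
  case: (ltnP x S) => h1; first by rewrite col_old //; exact: (i_col I).
  case: (eqVneq x S) => [->|h2]; first by rewrite col_u; lia.
  case: (eqVneq x (S + s - 1)) => [->|h3]; first by rewrite col_w; lia.
  rewrite col_i; lia.
- rewrite /=; lia.
- rewrite /=; lia.
- exact: col_u.
- exact: col_w.
- move=> x hx; have {}hx : x < S + s by [].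
  case: (ltnP x S) => h1.
    have [y /andP[exy cy]] := i_dom I h1.
    have /andP[_ hy] := Hb _ _ exy.
    exists y; rewrite col_old // col_old //.
    by have -> : E t' x y by rewrite /= exy.
  case: (eqVneq x S) => [->|h2].
    exists S.+1; rewrite col_u E_up //; try lia.
    case: (eqVneq S.+1 (S + s - 1)) => [->|h4]; first by rewrite col_w.
    rewrite col_i; lia.
  case: (eqVneq x (S + s - 1)) => [->|h3].
    exists (S + s - 2); rewrite col_w.
    have -> : E t' (S + s - 1) (S + s - 2).
      by rewrite step_sym (_ : S + s - 1 = (S + s - 2).+1); [apply: E_up|]; lia.
    case: (eqVneq (S + s - 2) S) => [->|h4]; first by rewrite col_u.
    rewrite col_i; lia.
  case: (eqVneq ((x - S) %% 2) 1) => hodd.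
    exists x.-1.
    have -> : E t' x x.-1.
      by rewrite step_sym (_ : x = x.-1.+1); [apply: E_up|]; lia.
    case: (eqVneq x.-1 S) => [->|h4]; first by rewrite col_u col_i; lia.
    rewrite !col_i; lia.
  exists x.+1; rewrite E_up; try lia.
  case: (eqVneq x.+1 (S + s - 1)) => [->|h4]; first by rewrite col_w col_i; lia.
  rewrite !col_i; lia.
- move=> c.
  pose a := if c == 0 then wL t else uL t.
  have ca : col t a != c.
    by rewrite /a; case: (eqVneq c 0) => [->|c0]; [rewrite /= Hcw | rewrite Hcu eq_sym].
  have sym := step_sym.
  have anchor x : x < S + s -> col t' x != c -> reach (E t') (fun z => col t' z != c) x a.
    move=> hx cx.
    case: (ltnP x S) => h1.
      apply: old_lift; [exact: h1 | by rewrite /a; case: (c == 0) | by rewrite -col_old | exact: ca].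
    have toU : reach (E t') (fun z => col t' z != c) S (uL t) -> c != 0 -> 
               reach (E t') (fun z => col t' z != c) S a.
      by move=> h c0; rewrite /a (negbTE c0).
    have toW : c == 0 ->
               reach (E t') (fun z => col t' z != c) (S + s - 1) a.
      move=> c0; rewrite /a c0; apply: reach1; first exact: E_w.
      by rewrite col_old // Hcw; move/eqP: c0 => ->.
    have SU : col t (uL t) != c -> reach (E t') (fun z => col t' z != c) S (uL t).
      by move=> h; apply: reach1; [exact: E_u | rewrite col_old].
    have WU : c >= 2 -> reach (E t') (fun z => col t' z != c) (S + s - 1) (uL t).
      move=> c2; have okw : col t' (wL t) != c by rewrite col_old // Hcw; lia.
      apply: reach_trans (reach1 E_w okw) (old_lift Hw Hu _ _); rewrite ?Hcw ?Hcu; lia.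
    have Wa : c != 1 -> reach (E t') (fun z => col t' z != c) (S + s - 1) a.
      move=> c1; case: (eqVneq c 0) => [c0|c0]; first by apply: toW; rewrite c0.
      rewrite /a (negbTE c0); apply: WU; lia.
    have Sa : c != 0 -> reach (E t') (fun z => col t' z != c) S a.
      move=> c0; rewrite /a (negbTE c0); apply: SU; rewrite Hcu eq_sym //.
    case: (eqVneq x S) => [xS|h2].
      subst x; apply: Sa; by apply: contraNneq cx => ->; rewrite col_u.
    case: (eqVneq x (S + s - 1)) => [xW|h3].
      subst x; apply: Wa; by apply: contraNneq cx => ->; rewrite col_w.
    have cxv := col_i (x := x); rewrite cxv in cx; last lia.
    case: (boolP ((col t' x < c) || (c == 1))) => hc.
      have c0 : c != 0 by lia.
      apply: reach_trans (reach_sym sym (chain_up (x := S) (y := x) (c := c) _ _ _ _) _) (Sa c0); try lia.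
      * move=> z hz; rewrite col_i; last lia.
        rewrite cxv in hc; lia.
      * by rewrite col_u eq_sym.
    have hc' : (c <= col t' x) && (c != 1) by move: hc; lia.
    rewrite cxv in hc'; last lia.
    apply: reach_trans (chain_up (x := x) (y := S + s - 1) (c := c) _ _ _ _) (Wa _).
    all: try lia.
    move=> z hz; case: (eqVneq z (S + s - 1)) => [->|hz']; first by rewrite col_w; lia.
    rewrite col_i; lia.
  move=> x y hx hy cx cy.
  apply: reach_trans (anchor x hx cx) (reach_sym sym (anchor y hy cy) cy).
Qed.

End Step.
Definition cnt (t : st) := \sum_(0 <= b < sz t) count (E t ^~ b) (iota 0 b).

Lemma cnt1 v b : count (pred1 v) (iota 0 b) = (v < b).
Proof. by rewrite count_uniq_mem ?iota_uniq // mem_iota. Qed.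

Lemma cnt_step k s t : 2 <= k -> 2 <= s -> s <= 2 * k - 2 -> Inv k t ->
  cnt (step s t) = cnt t + s + 1.
Proof.
move=> k2 s2 sk I.
have Hu := i_u I; have Hw := i_w I; have Hb := i_bnd I.
set S := sz t.
rewrite /cnt [sz (step s t)]/= (big_cat_nat _ (n := S)) /=; try lia.
rewrite -addnA; congr (_ + _).
  apply: eq_big_nat => b hb; apply: eq_in_count => a; rewrite mem_iota /= /R => ha.
  rewrite -/S; lia.
have Eold a b : S <= b -> E t a b = false.
  move=> hb; apply/negP => /Hb; rewrite -/S; lia.
rewrite big_ltn; last lia.
rewrite (_ : S + s = (S + s - 1).+1); last lia.
rewrite big_nat_recr /=; last lia.
have -> : count (E (step s t) ^~ S) (iota 0 S) = 1.
  rewrite (_ : 1 = count (pred1 (uL t)) (iota 0 S)); last by rewrite cnt1 Hu.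
  apply: eq_in_count => a; rewrite mem_iota /= /R => ha.
  rewrite Eold // -/S; lia.
have -> : count (E (step s t) ^~ (S + s - 1)) (iota 0 (S + s - 1)) = 2.
  rewrite (_ : 2 = count (predU (pred1 (wL t)) (pred1 (S + s - 2))) (iota 0 (S + s - 1))).
    apply: eq_in_count => a; rewrite mem_iota /= /R => ha.
    rewrite Eold -/S; lia.
  have hI : count (predI (pred1 (wL t)) (pred1 (S + s - 2))) (iota 0 (S + s - 1)) = 0.
    rewrite (eq_in_count (a2 := pred0)) ?count_pred0 //.
    move=> a; rewrite mem_iota /= => _; lia.
  have := count_predUI (pred1 (wL t)) (pred1 (S + s - 2)) (iota 0 (S + s - 1)).
  rewrite hI !cnt1 addn0 => ->; lia.
have -> : \sum_(S.+1 <= i < S + s - 1) count (E (step s t) ^~ i) (iota 0 i) =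
          \sum_(S.+1 <= i < S + s - 1) 1.
  apply: eq_big_nat => b hb.
  rewrite (_ : 1 = count (pred1 b.-1) (iota 0 b)); last by rewrite cnt1; lia.
  apply: eq_in_count => a; rewrite mem_iota /= /R => ha.
  rewrite Eold -/S; lia.
rewrite sum_nat_const_nat; lia.
Qed.

Lemma cnt_base f : cnt (base f) = 1 + 2 * f.
Proof. by case: f; rewrite /cnt unlock. Qed.
Definition okseq k (ss : seq nat) := all (fun s => (2 <= s) && (s <= 2 * k - 2)) ss.

Lemma inv_build k f ss : 2 <= k -> okseq k ss -> Inv k (build f ss).
Proof.
move=> k2; elim: ss => [|s ss IH] /=; first by move=> _; exact: inv_base.
case/andP => /andP[s2 sk] /IH h; exact: inv_step.
Qed.

Lemma sz_build f ss : sz (build f ss) = 2 + f + sumn ss.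
Proof. elim: ss => [|s ss IH] /=; [by rewrite addn0 | rewrite IH; lia]. Qed.

Lemma cnt_build k f ss : 2 <= k -> okseq k ss ->
  cnt (build f ss) = 1 + 2 * f + sumn ss + size ss.
Proof.
move=> k2; elim: ss => [|s ss IH] /=; first by move=> _; rewrite cnt_base; lia.
case/andP => /andP[s2 sk] h; rewrite (cnt_step k2 s2 sk (inv_build f k2 h)).
rewrite IH //; lia.
Qed.

Lemma colors_build k f ss : 2 <= k -> okseq k ss ->
  forall j, j < k -> (j < 2) || ((2 * k - 2) \in ss) ->
  exists x, x < sz (build f ss) /\ col (build f ss) x = j.
Proof.
move=> k2; elim: ss => [|s ss IH] /=.
  move=> _ j jk; rewrite in_nil orbF => j2; exists j; split; first lia.
  by case: j j2 {jk} => [|[|]].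
case/andP => /andP[s2 sk] hok j jk.
rewrite in_cons => hj.
case: (boolP ((j < 2) || (2 * k - 2 \in ss))) => hj'.
  have [x [hx cx]] := IH hok j jk hj'.
  exists x; split; first by rewrite /=; lia.
  apply: (@eq_trans _ _ (col (step s (build f ss)) x)) => //.
  by rewrite col_old.
have sL : s = 2 * k - 2.
  by move: hj hj'; case: (j < 2); case: (_ \in ss); rewrite /= ?orbF ?orbT // => /eqP ->.
have j2 : 2 <= j by move: hj'; rewrite negb_or -leqNgt => /andP[].
exists (sz (build f ss) + 2 * (j - 2) + 1); split; first by rewrite /=; lia.
apply: (@eq_trans _ _ (col (step s (build f ss)) (sz (build f ss) + 2 * (j - 2) + 1))) => //.
rewrite (col_i k2 s2 sk); lia.
Qed.
Lemma icac_suff n k (e : rel 'I_n) (c : 'I_n -> 'I_k) : symmetric e ->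
  (forall v, exists w, e v w && (c w != c v)) ->
  (forall col x y, c x != col -> c y != col ->
     exists p, [/\ path e x p, last x p = y & all (fun w => c w != col) p]) ->
  int_vertex_color_avoiding_connected e c.
Proof.
move=> es dom conn col u v.
have [u' [pre [h1 h2 h3 h4]]] : exists u' pre,
    [/\ path e u pre, last u pre = u', c u' != col & all (fun w => c w != col) pre].
  case: (eqVneq (c u) col) => [cu|cu]; last by exists u, [::].
  have [w /andP[ew cw]] := dom u; exists w, [:: w]; split => /=.
  - by rewrite ew.
  - by [].
  - by rewrite -cu.
  - by rewrite -cu cw.
have [v' [post [g1 g2 g3 g4]]] : exists v' post,
    [/\ path e v' post, last v' post = v, c v' != col &
        all (fun w => (c w != col) || (w == v)) post].
  case: (eqVneq (c v) col) => [cv|cv]; last by exists v, [::].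
  have [w /andP[ew cw]] := dom v; exists w, [:: v]; split => /=.
  - by rewrite es ew.
  - by [].
  - by rewrite -cv.
  - by rewrite eqxx orbT.
have [p1 [m1 m2 m3]] := conn col u' v' h3 g3.
pose q := pre ++ p1 ++ post.
have qp : path e u q by rewrite /q !cat_path h1 h2 m1 m2 g1.
have ql : last u q = v by rewrite /q !last_cat h2 m2 g2.
have qa : all (fun w => (c w != col) || (w == v)) q.
  rewrite /q !all_cat g4 andbT; apply/andP; split.
    by apply/allP => w /(allP h4) ->.
  by apply/allP => w /(allP m3) ->.
move: ql; case: (shortenP qp) => p' pp' up' sub' lp'.
exists p'; split => //.
case/lastP: p' pp' up' sub' lp' => [|r z] pp' up' sub' lp' /=; first by [].
rewrite belast_rcons /=; apply/allP => w wr.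
move: up'; rewrite -rcons_cons rcons_uniq inE negb_or => /andP[/andP[_ zr] _].
have wq : w \in q by apply: sub'; rewrite mem_rcons inE wr orbT.
move/allP: qa => /(_ w wq) /orP[//|/eqP wv].
by move: lp'; rewrite last_rcons => zv; move: wr; rewrite wv -zv (negbTE zr).
Qed.
Lemma path_of_reach n (e : rel nat) (ok : pred nat) x y :
  (forall a b, e a b -> b < n) -> reach e ok x y ->
  forall x' : 'I_n, val x' = x ->
  exists p : seq 'I_n, [/\ path (fun a b : 'I_n => e a b) x' p, val (last x' p) = y &
                          all (fun w : 'I_n => ok w) p].
Proof.
move=> eb; elim=> [z|a b z eab okb _ IH] x' hx.
  by exists [::]; split.
have bn : b < n by exact: eb eab.
have [p [pp lp ap]] := IH (Ordinal bn) erefl.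
exists (Ordinal bn :: p); split => //=.
- by rewrite hx eab.
- by rewrite okb.
Qed.

Lemma part2_ge2 k : (2 <= k)%N -> exists N : nat, forall n : nat, (N <= n)%N ->
       exists (e : rel 'I_n) (c : 'I_n -> 'I_k),
         [/\ simple_graph e, uses_exactly_k_colors c,
             int_vertex_color_avoiding_connected e c &
             Posz (num_edges e) = icac_bound n k].
Proof.
move=> k2; exists (2 * k); move=> n hn.
case: k k2 hn => [//|k'] k2 hn.
set L := (2 * k'.+1 - 2)%N.
set q := ((n - 2) %/ L)%N; set r := ((n - 2) %% L)%N.
have L0 : (0 < L)%N by rewrite /L; lia.
have rL : (r < L)%N by rewrite /r ltn_mod.
have hnq : n = (L * q + r + 2)%N by rewrite /q /r (divn_eq (n - 2) L); lia.
have q1 : (1 <= q)%N by move: hnq; rewrite /L; nia.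
pose f := (r == 1)%N.
pose ss := (if (2 <= r)%N then [:: r] else [::]) ++ nseq q L.
pose t := build f ss.
have okss : okseq k'.+1 ss.
  rewrite /okseq all_cat; apply/andP; split.
    by case: ifP => //= h; rewrite h /=; move: rL; rewrite /L; lia.
  by apply/allP => s; rewrite mem_nseq => /andP[_ /eqP ->]; rewrite /L; lia.
have Lin : (2 * k'.+1 - 2 \in ss).
  by rewrite mem_cat mem_nseq -/L eqxx andbT; apply/orP; right; lia.
have It := inv_build f k2 okss.
have hsz : sz t = n.
  rewrite sz_build /ss sumn_cat sumn_nseq /f hnq.
  case: ifP => /= h; case: eqP => //=; lia.
pose e := fun x y : 'I_n => E t x y.
pose c := fun x : 'I_n => (inord (col t x) : 'I_k'.+1).
have colk x : (x < n)%N -> (col t x < k'.+1)%N by move=> h; apply: (i_col It); rewrite hsz.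
have cval (x : 'I_n) : val (c x) = col t x by rewrite /c /= inordK // -ltnS; apply: colk.
have eb a b : E t a b -> (b < n)%N by move/(i_bnd It) => /andP[_]; rewrite hsz.
exists e, c; split.
- split; [by move=> x y; rewrite /e (i_sym It) | by move=> x; rewrite /e (i_irr It)].
- move=> j.
  have [x [hx cx]] := colors_build f k2 okss (ltn_ord j) (introT orP (or_intror Lin)).
  rewrite hsz in hx; exists (Ordinal hx); apply: val_inj; by rewrite cval.
- apply: icac_suff.
  + by move=> x y; rewrite /e (i_sym It).
  + move=> v; have vn : (v < sz t)%N by rewrite hsz.
    have [w /andP[ew cw]] := i_dom It vn.
    have wn := eb _ _ ew.
    exists (Ordinal wn); rewrite /e ew /= -val_eqE !cval //.
  + move=> cl x y cx cy.
    have hr := i_conn It (c := val cl) (x := x) (y := y).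
    have xn : (x < sz t)%N by rewrite hsz.
    have yn : (y < sz t)%N by rewrite hsz.
    have cx' : col t x != val cl by rewrite -cval val_eqE.
    have cy' : col t y != val cl by rewrite -cval val_eqE.
    have := hr xn yn cx' cy'.
    move/(path_of_reach eb) => /(_ x erefl) [p [pp lp ap]].
    exists p; split => //.
    * by apply: val_inj.
    * by apply/allP => w /(allP ap); rewrite -val_eqE cval.
- rewrite bound_eq //; last lia.
  rewrite /e num_edges_nat.
  have -> : \sum_(0 <= b < n) count (E t ^~ b) (iota 0 b) = cnt t by rewrite /cnt hsz.
  rewrite (cnt_build f k2 okss).
  rewrite /ss size_cat sumn_cat sumn_nseq size_nseq /f -/L -/q -/r.
  congr Posz; move: hnq rL; case: ifP => /= h; case: eqP => /= hr; lia.
Qed.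

Lemma part2_k1 : exists N : nat, forall n : nat, (N <= n)%N ->
       exists (e : rel 'I_n) (c : 'I_n -> 'I_1),
         [/\ simple_graph e, uses_exactly_k_colors c,
             int_vertex_color_avoiding_connected e c &
             Posz (num_edges e) = icac_bound n 1].
Proof.
exists 1 => n hn.
exists (fun x y : 'I_n => x != y), (fun _ => ord0); split.
- by split; [move=> x y; rewrite eq_sym | move=> x; rewrite eqxx].
- move=> j; exists (Ordinal hn); by rewrite (ord1 j).
- move=> cl u v; case: (eqVneq u v) => [->|uv].
    by exists [::]; split.
  by exists [:: v]; split => //=; rewrite ?inE ?andbT ?uv.
- by rewrite /icac_bound eqxx -card_lt.
Qed.

Theorem theorem3p16 :
  (forall (n k : nat) (e : rel 'I_n) (c : 'I_n -> 'I_k),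
      (1 <= k)%N ->
      simple_graph e ->
      uses_exactly_k_colors c ->
      int_vertex_color_avoiding_connected e c ->
      (icac_bound n k <= Posz (num_edges e))%R)
  /\
  (forall k : nat, (1 <= k)%N ->
     exists N : nat, forall n : nat, (N <= n)%N ->
       exists (e : rel 'I_n) (c : 'I_n -> 'I_k),
         [/\ simple_graph e, uses_exactly_k_colors c,
             int_vertex_color_avoiding_connected e c &
             Posz (num_edges e) = icac_bound n k]).
Proof.
split; first exact: part1.
move=> k k1; case: (eqVneq k 1) => [->|k2]; first exact: part2_k1.
apply: part2_ge2; lia.
Qed.
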